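(* Let $G$ be a torsionless abelian group and $H\subseteq G$ a subgroup. Then $G$ binds $H$ if and only if every homomorphism $G\to\mathbb{Z}^{(\omega)}$ maps $H$ onto a group of finite rank. Moreover, $G$ binds itself if and only if $G$ does not admit a homomorphism onto $\mathbb{Z}^{(\omega)}$, if and only if $G$ does not have a direct summand isomorphic to $\mathbb{Z}^{(\omega)}$.
   Context: All groups are abelian. $\mathbb{Z}^{(\omega)}=\bigoplus_{n\in\omega}\mathbb{Z}$ is the direct sum of countably many copies of $\mathbb{Z}$ (the free abelian group of countably infinite rank). A group is torsionless if it embeds in $\mathbb{Z}^I$ for some set $I$ (equivalently, homomorphisms to $\mathbb{Z}$ separate its points). Rank means torsion-free rank (the dimension of $G\otimes\mathbb{Q}$ over $\mathbb{Q}$). A group $G$ binds a subgroup $H$ if every homomorphism from $G$ to a free abelian group maps $H$ into a group of finite rank. *)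

(* Defs.v *)
(* abelian groups are zmodTypes, homomorphisms are additive maps. *)
From HB Require Import structures.
From mathcomp Require Import all_boot all_order all_algebra.
Set Implicit Arguments. Unset Strict Implicit. Unset Printing Implicit Defensive.
Import Order.TTheory GRing.Theory Num.Theory.
Local Open Scope ring_scope.

Definition is_subgroup (G : zmodType) (H : G -> Prop) : Prop :=
  H 0 /\ (forall x y, H x -> H y -> H (x - y)).

Definition image_of (U V : Type) (f : U -> V) (H : U -> Prop) : V -> Prop :=
  fun y => exists2 x, H x & f x = y.

Definition Zindep (V : zmodType) (s : seq V) : Prop :=
  forall c : seq int, size c = size s ->
    \sum_(i < size s) (s`_i *~ c`_i) = 0 -> forall i, c`_i = 0.

(* Torsion-free rank (dim of S (x) Q) is finite: Z-independent families
   contained in S have bounded size. *)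
Definition finite_rank (V : zmodType) (S : V -> Prop) : Prop :=
  exists n : nat, forall s : seq V, (forall x, x \in s -> S x) ->
    Zindep s -> (size s <= n)%N.

Definition free_abelian (F : zmodType) : Prop :=
  exists (I : eqType) (b : I -> F),
    (forall x : F, exists (s : seq I) (c : seq int),
        x = \sum_(i < size s) ((map b s)`_i *~ c`_i))
  /\ (forall s : seq I, uniq s -> Zindep (map b s)).

Definition binds (G : zmodType) (H : G -> Prop) : Prop :=
  forall (F : zmodType), free_abelian F ->
    forall f : {additive G -> F}, finite_rank (image_of f H).

(* Z^(omega) = direct sum of countably many copies of Z, realised as the
   additive group of integer polynomials (finitely supported sequences in Z). *)
Definition Zomega : zmodType := {poly int}.

Definition torsionless (G : zmodType) : Prop :=
  forall x : G, x != 0 -> exists f : {additive G -> int}, f x != 0.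

Definition has_Zomega_summand (G : zmodType) : Prop :=
  exists (A B : G -> Prop), [/\ is_subgroup A, is_subgroup B,
    (forall x, A x -> B x -> x = 0),
    (forall x, exists a b, [/\ A a, B b & x = a + b]) &
    (exists f : {additive Zomega -> G}, injective f /\
      (forall y, A y <-> exists z, f z = y))].

(* Main.v *)
Require Import Defs.
From HB Require Import structures.
From mathcomp Require Import all_boot all_order all_algebra.
From Stdlib Require Import ClassicalEpsilon Classical.
Set Implicit Arguments. Unset Strict Implicit. Unset Printing Implicit Defensive.
Import Order.TTheory GRing.Theory Num.Theory.
Local Open Scope ring_scope.

Lemma sum_pred1_uniq (V : zmodType) (I : eqType) (u : seq I) (x : I) (F : I -> V) :
  uniq u -> x \in u -> \sum_(i <- u | x == i) F i = F x.
Proof.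
elim: u => // a u IH /= /andP[au uu]; rewrite in_cons big_cons.
have [->|ne] /= := eqVneq x a.
  move=> _; rewrite big1_seq ?addr0 // => i /andP[/eqP ei iu].
  by move: au; rewrite ei iu.
by move=> xu; rewrite IH.
Qed.

Section Reps.
Variables (V : zmodType) (I : eqType) (b : I -> V).
Definition rval (r : seq (I * int)) : V := \sum_(p <- r) b p.1 *~ p.2.
Definition kap (r : seq (I * int)) (i : I) : int := \sum_(p <- r | p.1 == i) p.2.
Definition negr (r : seq (I * int)) := [seq (p.1, - p.2) | p <- r].

Lemma val_cat r1 r2 : rval (r1 ++ r2) = rval r1 + rval r2.
Proof. by rewrite /rval big_cat. Qed.
Lemma kap_cat r1 r2 i : kap (r1 ++ r2) i = kap r1 i + kap r2 i.
Proof. by rewrite /kap big_cat. Qed.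
Lemma val_neg r : rval (negr r) = - rval r.
Proof. by rewrite /rval big_map -sumrN; apply: eq_bigr => p _ /=; rewrite mulrNz. Qed.
Lemma kap_neg r i : kap (negr r) i = - kap r i.
Proof. by rewrite /kap big_map -sumrN. Qed.
Lemma val_nil : rval [::] = 0. Proof. by rewrite /rval big_nil. Qed.
Lemma val_cons p r : rval (p :: r) = b p.1 *~ p.2 + rval r.
Proof. by rewrite /rval big_cons. Qed.
Lemma kap_notin r i : i \notin map fst r -> kap r i = 0.
Proof.
move=> ni; rewrite /kap big1_seq // => p /andP[/eqP e pr].
by case/negP: ni; rewrite -e; apply: map_f.
Qed.
Lemma kap_nz r i : kap r i != 0 -> i \in map fst r.
Proof. by apply: contraR => /kap_notin ->. Qed.

Lemma regroup r : rval r = \sum_(i <- undup (map fst r)) b i *~ kap r i.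
Proof.
rewrite /kap.
under eq_bigr do rewrite mulrz_sumr.
have -> : \sum_(i <- undup [seq p.1 | p <- r]) \sum_(p <- r | p.1 == i) b i *~ p.2
   = \sum_(i <- undup [seq p.1 | p <- r]) \sum_(p <- r) (if p.1 == i then b p.1 *~ p.2 else 0).
  apply: eq_bigr => i _; rewrite big_mkcond; apply: eq_bigr => p _.
  by case: eqP => // ->.
rewrite exchange_big /rval; apply: eq_big_seq => p pr.
rewrite -big_mkcond /= sum_pred1_uniq ?undup_uniq // mem_undup; exact: map_f.
Qed.

Section Coord.
Variable good : I -> Prop.
Hypothesis L : forall r, rval r = 0 -> forall i, good i -> kap r i = 0.
Definition rcoord (i : I) (x : V) : int :=
  kap (epsilon (inhabits [::]) (fun r => x = rval r)) i.
Lemma coord_val r i : good i -> rcoord i (rval r) = kap r i.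
Proof.
move=> gi; rewrite /rcoord.
set r' := epsilon _ _.
have e : rval r = rval r' := epsilon_spec (inhabits [::]) (fun r0 => rval r = rval r0) (ex_intro _ r erefl).
have := @L (r' ++ negr r) _ i gi; rewrite val_cat val_neg -e subrr => /(_ erefl).
by rewrite kap_cat kap_neg => /eqP; rewrite subr_eq0 => /eqP.
Qed.
End Coord.
End Reps.

Lemma sum_nth_map (V : zmodType) (U : Type) (g : U -> V) (h : U -> int) (u : seq U) :
  \sum_(j < size (map g u)) (map g u)`_j *~ (map h u)`_j = \sum_(x <- u) g x *~ h x.
Proof.
elim: u => [|a u IH]; first by rewrite big_ord0 big_nil.
by rewrite /= big_ord_recl big_cons /= -IH.
Qed.

Lemma span_val (V : zmodType) (I : eqType) (b : I -> V) (s : seq I) (c : seq int) :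
  exists r, \sum_(i < size s) ((map b s)`_i *~ c`_i) = rval b r.
Proof.
set c' := mkseq (fun j => c`_j) (size s).
have sc : size c' = size s by rewrite size_mkseq.
exists (zip s c').
have e1 : map b s = map (fun p => b p.1) (zip s c').
  by rewrite (map_comp b fst) -/(unzip1 _) unzip1_zip // sc.
have e2 : c' = map snd (zip s c') by rewrite -/(unzip2 _) unzip2_zip // sc.
rewrite /rval -(sum_nth_map (fun p => b p.1) snd) -e1 -e2 size_map.
by apply: eq_bigr => j _; rewrite /c' nth_mkseq.
Qed.

Lemma L_free (V : zmodType) (I : eqType) (b : I -> V) :
  (forall s : seq I, uniq s -> Zindep (map b s)) ->
  forall r, rval b r = 0 -> forall i, kap r i = 0.
Proof.
move=> ind r r0 i.
set u := undup (map fst r).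
case iu: (i \in u); last by apply: kap_notin; rewrite -mem_undup iu.
have := ind u (undup_uniq _) (map (kap r) u) (etrans (size_map _ _) (esym (size_map _ _))).
rewrite sum_nth_map -regroup r0 => /(_ erefl (index i u)).
by rewrite (nth_map i) ?index_mem // nth_index.
Qed.

Lemma sum_nz (V : zmodType) (I : eqType) (s : seq I) (P : pred I) (F : I -> V) :
  \sum_(j <- s | P j) F j != 0 -> exists j, [/\ j \in s, P j & F j != 0].
Proof.
move=> nz; apply: NNPP => ne; case/negP: nz; apply/eqP; apply: big1_seq => j /andP[pj js].
by apply: NNPP => /eqP fj; apply: ne; exists j.
Qed.

Section Proj.
Variables (F : zmodType) (I : eqType) (b : I -> F).
Hypothesis span : forall x, exists r, x = rval b r.
Hypothesis ind : forall r, rval b r = 0 -> forall i, kap r i = 0.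
Variable S : nat -> seq F.
Hypothesis S_ind : forall n, Zindep (S n).

Definition rep (x : F) := epsilon (inhabits [::]) (fun r => x = rval b r).
Lemma rep_val x : x = rval b (rep x).
Proof. exact: (epsilon_spec (inhabits [::]) (fun r => x = rval b r) (span x)). Qed.

Definition crd (i : I) (x : F) : int := rcoord b i x.
Lemma crd_val r i : crd i (rval b r) = kap r i.
Proof. exact: (@coord_val _ _ b (fun _ => True) (fun r e i _ => @ind r e i) r i Logic.I). Qed.
Lemma crd_kap x i : crd i x = kap (rep x) i.
Proof. by rewrite {1}(rep_val x) crd_val. Qed.

Lemma crd_sub i : GRing.zmod_morphism (crd i).
Proof.
move=> x y; rewrite {1}(rep_val x) {1}(rep_val y) -val_neg -val_cat crd_val.
by rewrite kap_cat kap_neg !crd_kap.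
Qed.
HB.instance Definition _ (i : I) := GRing.isZmodMorphism.Build F int (crd i) (crd_sub i).

Definition T n := undup (flatten [seq map fst (rep y) | y <- S n]).
Definition nI i := epsilon (inhabits 0%N) (fun n => i \in T n).
Definition code i := pickle (nI i, index i (T (nI i))).
Definition psi (k : nat) (x : F) : int :=
  if @pickle_inv (nat * nat)%type k is Some nm then
    \sum_(j <- T nm.1 | (index j (T nm.1) == nm.2) && (nI j == nm.1)) crd j x
  else 0.

Lemma psi_sub k x y : psi k (x - y) = psi k x - psi k y.
Proof.
rewrite /psi; case: pickle_inv => [nm|]; last by rewrite subr0.
by rewrite -sumrB; apply: eq_bigr => j _; rewrite raddfB.
Qed.

Lemma psi_code i n x : i \in T n -> psi (code i) x = crd i x.
Proof.
move=> iT.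
have iT' : i \in T (nI i) := epsilon_spec (inhabits 0%N) (fun n => i \in T n) (ex_intro _ n iT).
rewrite /psi /code pickleK_inv /= big_seq_cond.
rewrite (eq_bigl (fun j => (j \in T (nI i)) && (i == j))).
  by rewrite -big_seq_cond sum_pred1_uniq ?undup_uniq.
move=> j /=; case jT: (j \in T (nI i)) => //=.
have [<-|ne] := eqVneq i j; first by rewrite !eqxx.
apply/negbTE/nandP; left; apply: contra ne => /eqP e.
by rewrite -(nth_index i jT) e nth_index.
Qed.

Lemma psi_supp k x : psi k x != 0 -> exists j, k = code j /\ crd j x != 0.
Proof.
rewrite /psi; case E: pickle_inv => [[n m]|]; last by rewrite eqxx.
case/sum_nz => j [jT /andP[/eqP ij /eqP nj] nz]; exists j; split => //.
have := @pickle_invK (nat * nat)%type k; rewrite E /= => <-.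
by rewrite /code nj ij.
Qed.

Lemma crd_supp j x : crd j x != 0 -> j \in map fst (rep x).
Proof. by rewrite crd_kap => /kap_nz. Qed.

Definition bound x := \max_(j <- map fst (rep x)) (code j).+1.
Definition Pp (x : F) : {poly int} := \poly_(k < bound x) psi k x.

Lemma coefP x k : (Pp x)`_k = psi k x.
Proof.
rewrite coef_poly; case: ifP => // /negbT; rewrite -leqNgt => le.
case: (eqVneq (psi k x) 0) => // /psi_supp [j [ekj nz]].
have := @leq_bigmax_seq _ _ predT (fun j => (code j).+1) _ (crd_supp nz) isT.
by rewrite -/(bound x) -ekj => /leq_trans /(_ le); rewrite ltnn.
Qed.

Definition P (x : F) : Zomega := Pp x.
Lemma P_sub : GRing.zmod_morphism P.
Proof. by move=> x y; apply/polyP => k; rewrite coefB /P !coefP psi_sub. Qed.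
HB.instance Definition _ := GRing.isZmodMorphism.Build F Zomega P P_sub.

Lemma P_indep n : Zindep (map P (S n)).
Proof.
move=> c sc zc.
set z := \sum_(j < size (S n)) (S n)`_j *~ c`_j.
have Pz : P z = 0.
  rewrite -zc raddf_sum size_map; apply: eq_bigr => j _.
  by rewrite raddfMz (nth_map 0).
have cz : forall i, crd i z = 0.
  move=> i; case iT: (i \in T n).
    by rewrite -(psi_code _ iT) -coefP -/(P z) Pz coef0.
  rewrite raddf_sum big1 // => j _; rewrite raddfMz.
  change (crd i (S n)`_j *~ c`_j = 0).
  case: (eqVneq (crd i (S n)`_j) 0) => [e|nz]; first by rewrite e mul0rz.
  have := crd_supp nz => im; move/negbT: iT => /negP; case.
  rewrite mem_undup; apply/flatten_mapP; exists (S n)`_j => //.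
  by apply: mem_nth; exact: ltn_ord.
have z0 : z = 0.
  rewrite (rep_val z) regroup big1 // => i _.
  by rewrite -crd_kap cz mulr0z.
by move=> i; apply: (@S_ind n c _ z0); rewrite sc size_map.
Qed.
End Proj.

Lemma part1_back (G : zmodType) (H : G -> Prop) :
  (forall f : {additive G -> Zomega}, finite_rank (image_of f H)) -> binds H.
Proof.
move=> hyp F [I [b [span0 ind0]]] f; apply: NNPP => nfr.
have span : forall x, exists r, x = rval b r.
  move=> x; have [s [c ->]] := span0 x; have [r e] := span_val b s c.
  by exists r.
have ind := L_free ind0.
have ex : forall n, exists s, [/\ (forall y, y \in s -> image_of f H y), Zindep s & (n < size s)%N].
  move=> n; apply: NNPP => ne; apply: nfr; exists n => s sim sind.
  by apply: NNPP => /negP; rewrite -ltnNge => lt; apply: ne; exists s.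
pose S n := epsilon (inhabits [::]) (fun s => [/\ (forall y, y \in s -> image_of f H y), Zindep s & (n < size s)%N]).
have SP n : [/\ (forall y, y \in S n -> image_of f H y), Zindep (S n) & (n < size (S n))%N].
  exact: (epsilon_spec _ _ (ex n)).
have S_ind n : Zindep (S n) by case: (SP n).
have [N hN] := hyp (P b S \o f).
case: (SP N) => Sim _ Ssz.
have Him : forall y, y \in map (P b S) (S N) -> image_of (P b S \o f) H y.
  move=> y /mapP [y' y'S ->]; have [h Hh fh] := Sim _ y'S.
  by exists h => //=; rewrite fh.
have := hN _ Him (P_indep span ind S_ind (n:=N)).
by rewrite size_map leqNgt Ssz.
Qed.

Definition Xz (i : nat) : Zomega := 'X^i.

Lemma poly_sumX (p : {poly int}) : p = \sum_(i < size p) ('X^i : {poly int}) *~ p`_i.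
Proof.
rewrite -{1}[p]coefK poly_def; apply: eq_bigr => i _.
by rewrite -scaler_int intz.
Qed.

Lemma Xindep (s : seq nat) : uniq s -> Zindep (map Xz s).
Proof.
move=> us c sc z i.
case: (ltnP i (size s)) => [lti|gei]; last by rewrite nth_default // sc size_map.
have := congr1 (fun q : {poly int} => q`_(nth 0%N s i)) z.
rewrite coef0 coef_sum size_map (bigD1 (Ordinal lti)) //= big1 ?addr0.
  by rewrite (nth_map 0%N) // coefMrz /Xz coefXn eqxx mulrzz mul1r.
move=> j ne; rewrite (nth_map 0%N) // coefMrz /Xz coefXn.
rewrite nth_uniq //.
have -> : (i == j) = false by apply/negbTE; rewrite eq_sym.
by rewrite mul0rz.
Qed.

Lemma Zomega_free : free_abelian Zomega.
Proof.
exists (nat : eqType), Xz; split; last exact: Xindep.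
move=> x; exists (iota 0 (size (x : {poly int}))), (x : {poly int}).
rewrite {1}[x]poly_sumX.
rewrite size_iota; apply: eq_bigr => i _.
by rewrite (nth_map 0%N) ?size_iota // nth_iota.
Qed.

Lemma Zomega_inf : ~ finite_rank (fun _ : Zomega => True).
Proof.
case=> n h; have := h (map Xz (iota 0 n.+1)) (fun _ _ => Logic.I) (Xindep (iota_uniq 0 n.+1)).
by rewrite size_map size_iota ltnn.
Qed.

Lemma steinitz N (s : seq {poly int}) :
  (forall y, y \in s -> (size y <= N)%N) -> Zindep s -> (size s <= N)%N.
Proof.
move=> hs ind; rewrite leqNgt; apply/negP => lt.
set m := size s in lt ind *.
pose A : 'M[rat]_(m, N) := \matrix_(i, k) ((s`_i)`_k)%:~R.
have rk : (0 < \rank (kermx A))%N.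
  by rewrite mxrank_ker subn_gt0 (leq_ltn_trans (rank_leq_col A) lt).
have [i0 ni0] : exists i0, row i0 (kermx A) != 0.
  apply: NNPP => ne; move: rk; suff -> : kermx A = 0 by rewrite mxrank0.
  apply/row_matrixP => i; rewrite row0; apply: NNPP => /eqP h; apply: ne; by exists i.
set v := row i0 (kermx A) in ni0.
have vA : v *m A = 0 by rewrite /v -row_mul mulmx_ker row0.
have [j0 nj0] : exists j0, v 0 j0 != 0.
  apply: NNPP => ne; case/eqP: ni0; apply/rowP => j; rewrite [RHS]mxE.
  by apply: NNPP => /eqP h; apply: ne; exists j.
pose Dn := \prod_(j < m) denq (v 0 j).
pose c (j : 'I_m) : int := numq (v 0 j) * \prod_(j' < m | j' != j) denq (v 0 j').
have cE j : (c j)%:~R = v 0 j * Dn%:~R :> rat.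
  rewrite /c /Dn [in RHS](bigD1 j) //=.
  by rewrite !intrM numqE mulrA.
pose cs := mkseq (fun j => c (insubd j0 j)) m.
have sum0 : \sum_(i < m) s`_i *~ cs`_i = 0.
  apply/polyP => k; rewrite coef_sum coef0.
  case: (ltnP k N) => [ltk|gek].
    apply: (@intr_inj rat); rewrite rmorph0 rmorph_sum /=.
    have := congr1 (fun M : 'M[rat]_(1, N) => M 0 (Ordinal ltk)) vA; rewrite !mxE => e.
    rewrite (eq_bigr (fun i => (v 0 i * A i (Ordinal ltk)) * Dn%:~R)).
      by rewrite -mulr_suml e mul0r.
    move=> i _; rewrite coefMrz /cs nth_mkseq // valKd mulrzz intrM cE mxE /=.
    by rewrite [A _ _]mxE /= mulrCA mulrA.
  rewrite big1 // => i _; rewrite coefMrz nth_default ?mul0rz //.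
  exact: leq_trans (hs _ (mem_nth 0 (ltn_ord i))) gek.
have := ind cs (size_mkseq _ _) sum0 j0.
rewrite /cs nth_mkseq // valKd => /(congr1 (fun z : int => z%:~R : rat)).
rewrite cE rmorph0 => /eqP; rewrite mulf_eq0 (negbTE nj0) /= intr_eq0.
by apply/negP/prodf_neq0 => j _; apply: denq_neq0.
Qed.

Section Sub.
Variables (G : zmodType) (f : {additive G -> Zomega}).

Definition fp (x : G) : {poly int} := f x.
Lemma fpB x y : fp (x - y) = fp x - fp y. Proof. exact: raddfB. Qed.
Lemma fpMz x q : fp (x *~ q) = fp x *~ q. Proof. exact: raddfMz. Qed.
Lemma fp0 : fp 0 = 0. Proof. exact: raddf0. Qed.

Definition Dp n (a : int) := exists x, (size (fp x) <= n.+1)%N /\ (fp x)`_n = a.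
Lemma Dp0 n : Dp n 0.
Proof. by exists 0; rewrite fp0 size_poly0 coef0. Qed.
Lemma DpB n a b : Dp n a -> Dp n b -> Dp n (a - b).
Proof.
move=> [x [sx cx]] [y [sy cy]]; exists (x - y); rewrite fpB coefB cx cy; split => //.
by rewrite (leq_trans (size_polyD _ _)) // geq_max size_polyN sx sy.
Qed.
Lemma DpM n a q : Dp n a -> Dp n (a * q).
Proof.
move=> [x [sx cx]]; exists (x *~ q); rewrite fpMz coefMrz cx mulrzz; split => //.
apply/leq_sizeP => j hj; rewrite coefMrz (leq_sizeP _ _ sx) // mul0rz //.
Qed.

Lemma d_ex n : exists d, Dp n d /\ forall a, Dp n a -> (d %| a)%Z.
Proof.
case: (classic (exists a, Dp n a /\ a != 0)) => [[a [Da nz]]|no]; last first.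
  exists 0; split; first exact: Dp0.
  move=> a Da; case: (eqVneq a 0) => [->|nz]; first by rewrite dvdz0.
  by exfalso; apply: no; exists a.
have [p [p0 Dpp]] : exists p : nat, (0 < p)%N /\ Dp n p%:Z.
  exists `|a|%N; split; first by rewrite absz_gt0.
  case: (ltrP 0 a) => a0.
    by rewrite gtz0_abs.
  rewrite lez0_abs // -mulrN1; exact: DpM.
suff : forall m : nat, (forall k : nat, (0 < k)%N -> (k <= m)%N -> Dp n k%:Z -> False)
            \/ (exists d, Dp n d /\ forall a, Dp n a -> (d %| a)%Z).
  by case/(_ p) => // /(_ p p0 (leqnn p) Dpp).
elim=> [|m [L|]]; [by left => k k0 /(leq_trans k0); rewrite ltnn| |by right].
case: (classic (Dp n m.+1%:Z)) => Dm; last first.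
  left => k k0; rewrite leq_eqVlt => /orP [/eqP -> //|]; rewrite ltnS; exact: L.
right; exists m.+1%:Z; split => // b Db.
apply/dvdz_mod0P; set r := (b %% m.+1%:Z)%Z.
have k0 : m.+1%:Z != 0 by [].
have r0 : 0 <= r by apply: modz_ge0.
have rlt : r < m.+1%:Z by have := ltz_mod b k0.
have Dr : Dp n r.
  have -> : r = b - m.+1%:Z * (b %/ m.+1%:Z)%Z.
    by rewrite [X in X - _](divz_eq b m.+1%:Z) [_ * m.+1%:Z]mulrC addrAC subrr add0r.
  by apply: DpB => //; apply: DpM.
apply: NNPP => /eqP rnz; apply: (L `|r|%N).
- by rewrite absz_gt0.
- by rewrite -ltnS -ltz_nat gez0_abs.
- by rewrite gez0_abs.
Qed.

Definition d n := epsilon (inhabits 0) (fun d => Dp n d /\ forall a, Dp n a -> (d %| a)%Z).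
Lemma dP n : Dp n (d n) /\ forall a, Dp n a -> (d n %| a)%Z.
Proof. exact: (epsilon_spec _ _ (d_ex n)). Qed.

Definition xeP n (x : G) := [/\ (size (fp x) <= n.+1)%N, (fp x)`_n = d n & (d n = 0 -> fp x = 0)].
Definition xe n := epsilon (inhabits 0) (xeP n).
Lemma xe_spec n : xeP n (xe n).
Proof.
apply: (epsilon_spec (inhabits 0) (xeP n)).
case: (eqVneq (d n) 0) => [d0|dn0].
  by exists 0; rewrite /xeP fp0 size_poly0 coef0 d0.
have [[x [sx cx]] _] := dP n; exists x; split => //.
by move=> /eqP; rewrite (negbTE dn0).
Qed.
Definition e n : {poly int} := fp (xe n).
Lemma e_size n : (size (e n) <= n.+1)%N. Proof. by case: (xe_spec n). Qed.
Lemma e_coef n : (e n)`_n = d n. Proof. by case: (xe_spec n). Qed.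
Lemma e_zero n : d n = 0 -> e n = 0. Proof. by case: (xe_spec n). Qed.

Lemma span n : forall y x, fp x = y -> (size y <= n)%N -> exists r, y = rval e r.
Proof.
elim: n => [|n IH] y x fxy sy.
  by exists [::]; rewrite val_nil; apply/eqP; rewrite -size_poly_leq0.
have Dy : Dp n y`_n by exists x; rewrite fxy.
have [_ dv] := dP n; have /dvdzP [q yq] := dv _ Dy.
have e1 : fp (x - xe n *~ q) = y - e n *~ q by rewrite fpB fpMz fxy.
have e2 : (size (y - e n *~ q)%R <= n)%N.
  apply/leq_sizeP => j hj; rewrite coefB coefMrz.
  move: hj; rewrite leq_eqVlt => /orP [/eqP <-|hj].
    by rewrite e_coef yq mulrzz mulrC subrr.
  by rewrite !(leq_sizeP _ _ sy) ?(leq_sizeP _ _ (e_size n)) ?mul0rz ?subrr.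
have [r hr] := IH _ _ e1 e2.
exists ((n, q) :: r); rewrite val_cons -hr /=.
by rewrite addrC subrK.
Qed.

Lemma coef_rval r N : all (fun p => (p.1 < N.+1)%N) r ->
  (rval e r)`_N = d N * kap r N.
Proof.
move=> ar; rewrite /rval coef_sum /kap mulr_sumr [RHS]big_mkcond.
apply: eq_big_seq => p pr /=.
have : (p.1 < N.+1)%N by move/allP: ar => /(_ p pr).
rewrite coefMrz; case: eqP => [->|ne] lt.
  by rewrite e_coef mulrzz.
rewrite nth_default ?mul0rz ?mulr0 //.
apply: leq_trans (e_size _) _; rewrite ltn_neqAle; apply/andP; split => //.
by apply/eqP.
Qed.

Lemma tri_aux N : forall r, all (fun p => (p.1 < N)%N) r -> rval e r = 0 ->
  forall i, d i != 0 -> kap r i = 0.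
Proof.
elim: N => [|N IH] r ar r0 i di.
  by case: r ar r0 => [|p r /andP []] //; rewrite /kap big_nil.
have kN : d N != 0 -> kap r N = 0.
  move=> dN; have := coef_rval ar; rewrite r0 coef0 => /esym /eqP.
  by rewrite mulf_eq0 (negbTE dN) => /eqP.
set r' := [seq p <- r | p.1 != N].
have hsplit : rval e r = rval e r' + e N *~ kap r N.
  rewrite /rval /kap (bigID (fun p => p.1 == N)) /= addrC big_filter; congr (_ + _).
  rewrite mulrz_sumr; apply: eq_bigr => p /eqP -> //.
have r'0 : rval e r' = 0.
  move: hsplit; rewrite r0; case: (eqVneq (d N) 0) => [dN|dN].
    by rewrite e_zero // mul0rz addr0 => <-.
  by rewrite kN // mulr0z addr0 => <-.
have ar' : all (fun p => (p.1 < N)%N) r'.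
  apply/allP => p; rewrite mem_filter => /andP [ne pr].
  by move/allP: ar => /(_ p pr); rewrite ltnS leq_eqVlt (negbTE ne).
have [ei|ne] := eqVneq i N; first by rewrite ei; apply: kN; rewrite -ei.
rewrite -(IH r' ar' r'0 i di) /kap big_filter_cond; apply: eq_bigl => p.
by case: (eqVneq p.1 i) => [->|]; rewrite ?ne ?andbF.
Qed.

Lemma tri r : rval e r = 0 -> forall i, d i != 0 -> kap r i = 0.
Proof.
apply: (@tri_aux (\max_(p <- r) p.1).+1); apply/allP => p pr.
by rewrite ltnS (@leq_bigmax_seq _ _ predT (fun p : nat * int => p.1) _ pr).
Qed.

Lemma inf_d : ~ finite_rank (image_of f (fun _ => True)) ->
  forall N, exists k, (N <= k)%N /\ d k != 0.
Proof.
move=> nfr N; apply: NNPP => ne.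
have d0 : forall k, (N <= k)%N -> d k = 0.
  by move=> k Nk; apply: NNPP => /eqP dk; apply: ne; exists k.
have sz : forall x, (size (fp x) <= N)%N.
  move=> x; rewrite leqNgt; apply/negP => lt.
  set n := (size (fp x)).-1.
  have sn : size (fp x) = n.+1 by rewrite /n prednK // (leq_ltn_trans _ lt).
  have Dn : Dp n (fp x)`_n by exists x; rewrite sn.
  have [_ dv] := dP n; move: (dv _ Dn); rewrite d0; last by rewrite -ltnS -sn.
  rewrite dvd0z => /eqP; apply/eqP.
  have : lead_coef (fp x) != 0 by rewrite lead_coef_eq0 -size_poly_eq0 sn.
  by rewrite lead_coefE sn.
apply: nfr; exists N => s hs ind.
have hs' : forall y : {poly int}, y \in (s : seq {poly int}) -> (size y <= N)%N.
  by move=> y /hs [x _ <-]; exact: sz.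
exact: (steinitz hs' ind).
Qed.

Definition next N := epsilon (inhabits 0%N) (fun k => (N <= k)%N /\ d k != 0).
Fixpoint nu j := if j is j'.+1 then next (nu j').+1 else next 0.

Section Inf.
Hypothesis nfr : ~ finite_rank (image_of f (fun _ => True)).
Lemma next_spec N : (N <= next N)%N /\ d (next N) != 0.
Proof. exact: (epsilon_spec _ _ (inf_d nfr N)). Qed.
Lemma nu_good j : d (nu j) != 0.
Proof. by case: j => [|j] /=; [case: (next_spec 0) | case: (next_spec (nu j).+1)]. Qed.
Lemma nu_lt j : (nu j < nu j.+1)%N.
Proof. by rewrite /=; case: (next_spec (nu j).+1). Qed.
Lemma nu_ge j : (j <= nu j)%N.
Proof. by elim: j => // j IH; apply: leq_ltn_trans IH (nu_lt j). Qed.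
Lemma nu_inj : injective nu.
Proof.
have hom := homo_ltn ltn_trans nu_lt.
move=> a b eab; case: (ltngtP a b) => // h; have := hom _ _ h; by rewrite eab ltnn.
Qed.

Definition rp (y : {poly int}) := epsilon (inhabits [::]) (fun r => y = rval e r).
Lemma rp_val x : fp x = rval e (rp (fp x)).
Proof.
apply: (epsilon_spec (inhabits [::]) (fun r => fp x = rval e r)).
exact: (@span (size (fp x)) (fp x) x erefl (leqnn _)).
Qed.

Definition cd i (y : {poly int}) : int := rcoord e i y.
Lemma cd_val r i : d i != 0 -> cd i (rval e r) = kap r i.
Proof. exact: (@coord_val _ _ e (fun i => d i != 0) tri r i). Qed.
Lemma cd_kap x i : d i != 0 -> cd i (fp x) = kap (rp (fp x)) i.
Proof. by move=> di; rewrite {1}(rp_val x) cd_val. Qed.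
Lemma cd_sub i x y : d i != 0 -> cd i (fp (x - y)) = cd i (fp x) - cd i (fp y).
Proof.
move=> di; rewrite fpB {1}(rp_val x) {1}(rp_val y) -val_neg -val_cat cd_val //.
by rewrite kap_cat kap_neg !cd_kap.
Qed.

Definition Bd x := (\max_(p <- rp (fp x)) p.1).+1.
Definition gp x : {poly int} := \poly_(j < Bd x) cd (nu j) (fp x).
Lemma coef_gp x j : (gp x)`_j = cd (nu j) (fp x).
Proof.
rewrite coef_poly; case: ifP => // /negbT; rewrite -leqNgt => le.
rewrite cd_kap ?nu_good // kap_notin //; apply/negP => /mapP [p pr ep].
have := @leq_bigmax_seq _ _ predT (fun p : nat * int => p.1) _ pr isT.
rewrite -ep -ltnS -/(Bd x) => lt.
have := leq_trans (leq_ltn_trans (nu_ge j) lt) le; by rewrite ltnn.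
Qed.

Definition g (x : G) : Zomega := gp x.
Lemma g_sub : GRing.zmod_morphism g.
Proof. by move=> x y; apply/polyP => k; rewrite coefB /g !coef_gp cd_sub ?nu_good. Qed.
HB.instance Definition _ := GRing.isZmodMorphism.Build G Zomega g g_sub.

Lemma g_X j : g (xe (nu j)) = 'X^j.
Proof.
apply/polyP => k; rewrite /g coef_gp coefXn -/(e (nu j)).
have -> : e (nu j) = rval e [:: (nu j, 1)] by rewrite val_cons val_nil addr0.
rewrite cd_val ?nu_good // /kap big_cons big_nil (inj_eq nu_inj) addr0.
by rewrite eq_sym; case: eqP.
Qed.

Lemma g_surj y : exists x, g x = y.
Proof.
exists (\sum_(i < size (y : {poly int})) xe (nu i) *~ (y : {poly int})`_i).
rewrite raddf_sum; apply: (@etrans _ _ (\sum_(i < size (y : {poly int})) ('X^i : {poly int}) *~ (y : {poly int})`_i)); last by rewrite -poly_sumX.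
by apply: eq_bigr => i _; rewrite raddfMz; congr (_ *~ _); exact: g_X.
Qed.
Lemma g_surj_ex : exists h : {additive G -> Zomega}, forall y, exists x, h x = y.
Proof. by exists g; exact: g_surj. Qed.
End Inf.
End Sub.

Lemma surj_not_binds (G : zmodType) :
  (exists f : {additive G -> Zomega}, forall y, exists x, f x = y) -> ~ binds (fun _ : G => True).
Proof.
move=> [f fs] b; have [N hN] := b Zomega Zomega_free f.
apply: Zomega_inf; exists N => s hs ind; apply: hN => // y _.
by have [x fx] := fs y; exists x.
Qed.

Lemma not_binds_surj (G : zmodType) :
  ~ binds (fun _ : G => True) -> exists f : {additive G -> Zomega}, forall y, exists x, f x = y.
Proof.
move=> nb.
have [f nfr] : exists f : {additive G -> Zomega}, ~ finite_rank (image_of f (fun _ => True)).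
  apply: NNPP => ne; apply: nb; apply: part1_back => f; apply: NNPP => nf; apply: ne; by exists f.
exact: (g_surj_ex nfr).
Qed.

Section Summand1.
Variables (G : zmodType) (A B : G -> Prop) (f : {additive Zomega -> G}).
Hypotheses (sA : is_subgroup A) (sB : is_subgroup B)
  (AB : forall x, A x -> B x -> x = 0)
  (dec : forall x, exists a b, [/\ A a, B b & x = a + b])
  (finj : injective f) (Af : forall y, A y <-> exists z, f z = y).

Definition prP x z := exists b, B b /\ x = f z + b.
Definition pr x := epsilon (inhabits 0) (prP x).

Lemma prP_ex x : exists z, prP x z.
Proof.
have [a [b [Aa Bb ->]]] := dec x; have [z fz] := (Af a).1 Aa.
by exists z, b; rewrite fz.
Qed.
Lemma pr_spec x : prP x (pr x). Proof. exact: (epsilon_spec _ _ (prP_ex x)). Qed.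

Lemma B_sub x y : B x -> B y -> B (x - y). Proof. by case: sB => _; apply. Qed.
Lemma A_f z : A (f z). Proof. by apply/Af; exists z. Qed.

Lemma prP_uniq x z z' : prP x z -> prP x z' -> z = z'.
Proof.
move=> [b [Bb ->]] [b' [Bb' e]].
have h : f (z - z') = b' - b.
  have fz : f z = f z' + b' - b by rewrite -e addrK.
  by rewrite raddfB fz [f z' + b']addrC addrAC addrK.
have : f (z - z') = 0 by apply: AB; [exact: A_f | rewrite h; exact: B_sub].
rewrite -(raddf0 f) => /finj /eqP; by rewrite subr_eq0 => /eqP.
Qed.

Lemma pr_sub : GRing.zmod_morphism pr.
Proof.
move=> x y; apply: (@prP_uniq (x - y)); first exact: pr_spec.
have [bx [Bx ex]] := pr_spec x; have [by_ [By ey]] := pr_spec y.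
exists (bx - by_); split; first exact: B_sub.
by rewrite raddfB {1}ex {1}ey opprD addrACA.
Qed.
HB.instance Definition _ := GRing.isZmodMorphism.Build G Zomega pr pr_sub.

Lemma pr_f z : pr (f z) = z.
Proof.
apply: (@prP_uniq (f z)); first exact: pr_spec.
by exists 0; split; [case: sB | rewrite addr0].
Qed.

Lemma summand_surj : exists h : {additive G -> Zomega}, forall y, exists x, h x = y.
Proof. by exists pr => y; exists (f y); exact: pr_f. Qed.
End Summand1.

Section Summand2.
Variables (G : zmodType) (g : {additive G -> Zomega}).
Definition xs n := epsilon (inhabits 0) (fun x => g x = ('X^n : {poly int})).
Definition sN N (p : {poly int}) : G := \sum_(i < N) xs i *~ p`_i.
Definition sm (p : Zomega) : G := sN (size (p : {poly int})) p.
Lemma sN_ext N (p : {poly int}) : (size p <= N)%N -> sN N p = sm p.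
Proof.
move=> le; rewrite /sm /sN (big_ord_widen N (fun i => xs i *~ p`_i) le) [RHS]big_mkcond.
apply: eq_bigr => i _.
case: ifP => // /negbT; rewrite -leqNgt => h.
by rewrite nth_default // mulr0z.
Qed.
Lemma sm_sub : GRing.zmod_morphism sm.
Proof.
move=> p q; set N := maxn (size (p : {poly int})) (size (q : {poly int})).
rewrite -(@sN_ext N (p - q)); last first.
  by rewrite (leq_trans (size_polyD _ _)) // size_polyN.
rewrite -(@sN_ext N p) ?leq_maxl // -(@sN_ext N q) ?leq_maxr //.
by rewrite /sN -sumrB; apply: eq_bigr => i _; rewrite coefB mulrzBr.
Qed.
HB.instance Definition _ := GRing.isZmodMorphism.Build Zomega G sm sm_sub.

Hypothesis gs : forall y, exists x, g x = y.
Lemma xs_spec n : g (xs n) = 'X^n.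
Proof. exact: (epsilon_spec (inhabits 0) (fun x => g x = ('X^n : {poly int})) (gs _)). Qed.
Lemma g_sm p : g (sm p) = p.
Proof.
rewrite /sm /sN raddf_sum.
apply: (@etrans _ _ (\sum_(i < size (p : {poly int})) ('X^i : {poly int}) *~ (p : {poly int})`_i)); last by rewrite -poly_sumX.
by apply: eq_bigr => i _; rewrite raddfMz xs_spec.
Qed.

Lemma surj_summand : has_Zomega_summand G.
Proof.
exists (fun y => exists z, sm z = y), (fun y => g y = 0); split.
- split; first by exists 0; rewrite raddf0.
  by move=> x y [z <-] [z' <-]; exists (z - z'); rewrite raddfB.
- by split; [rewrite raddf0 | move=> x y gx gy; rewrite raddfB gx gy subr0].
- by move=> x [z <-]; rewrite g_sm => ->; rewrite raddf0.
- move=> x; exists (sm (g x)), (x - sm (g x)); split => //; first by exists (g x).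
    by rewrite raddfB g_sm subrr.
  by rewrite addrC subrK.
- exists sm; split => // p q e; by rewrite -(g_sm p) -(g_sm q) e.
Qed.
End Summand2.

Theorem proposition3 (G : zmodType) (H : G -> Prop) :
  torsionless G -> is_subgroup H ->
  (binds H <-> forall f : {additive G -> Zomega}, finite_rank (image_of f H))
  /\ (binds (fun _ : G => True) <->
        ~ (exists f : {additive G -> Zomega}, forall y : Zomega, exists x, f x = y))
  /\ (binds (fun _ : G => True) <-> ~ has_Zomega_summand G).
Proof.
move=> _ _; split; [|split].
- split; last exact: part1_back.
  by move=> b f; apply: b; exact: Zomega_free.
- split; first by move=> b hs; exact: (surj_not_binds hs b).
  by move=> ns; apply: NNPP => nb; apply: ns; exact: not_binds_surj.
- split.
    move=> b [A [B [sA sB AB dec [f [finj Af]]]]].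
    exact: (surj_not_binds (summand_surj sB AB dec finj Af) b).
  move=> ns; apply: NNPP => nb; apply: ns.
  have [g gs] := not_binds_surj nb; exact: (surj_summand gs).
Qed.
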